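(* Let $\Pi=\{\pi^*_i\}_{i=1}^n$ be a set of policies where each $\pi^*_i$ is optimal with respect to weight vector $\mathbf{w}_i\in\mathcal{W}$, and suppose that the set $\Psi=\{\boldsymbol{\psi}^{\pi^*_i}\}_{i=1}^n$ of their expected successor features is an $\epsilon_1$-CCS. Let $\phi_{\max}=\max\|\boldsymbol{\phi}\|$ be the maximum norm of the reward feature vector. Then the GPI-expanded set $\Psi^{\text{GPI}}$ is an $\epsilon_2$-CCS, where $$\epsilon_2\le\min\Big\{\epsilon_1,\ \frac{2}{1-\gamma}\,\phi_{\max}\,\max_{\mathbf{w}\in\mathcal{W}}\min_i\|\mathbf{w}-\mathbf{w}_i\|\Big\}.$$
   Context: Consider MDPs $(\mathcal{S},\mathcal{A},p,r_{\mathbf{w}},\mu,\gamma)$ sharing $\mathcal{S},\mathcal{A}$, transition kernel $p$, initial state distribution $\mu$ and discount $\gamma\in[0,1)$, with rewards linear in fixed features $\boldsymbol{\phi}(s,a,s')\in\mathbb{R}^d$: $r_{\mathbf{w}}(s,a,s')=\boldsymbol{\phi}(s,a,s')\cdot\mathbf{w}$. The task set $\mathcal{W}$ is the probability simplex $\{\mathbf{w}\in\mathbb{R}^d:w_i\ge0,\sum_iw_i=1\}$. For a policy $\pi$, successor features are $\boldsymbol{\psi}^\pi(s,a)=\mathbb{E}_\pi[\sum_{i\ge0}\gamma^i\boldsymbol{\phi}(S_{t+i},A_{t+i},S_{t+i+1})\mid S_t=s,A_t=a]$, $q^\pi_{\mathbf{w}}(s,a)=\boldsymbol{\psi}^\pi(s,a)\cdot\mathbf{w}$,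 the expected successor feature vector is $\boldsymbol{\psi}^\pi=\mathbb{E}_{S_0\sim\mu}[\boldsymbol{\psi}^\pi(S_0,\pi(S_0))]$, and $v^\pi_{\mathbf{w}}=\boldsymbol{\psi}^\pi\cdot\mathbf{w}$; $v^*_{\mathbf{w}}=\max_\pi v^\pi_{\mathbf{w}}$ over all policies. The convex coverage set is $\mathrm{CCS}=\{\boldsymbol{\psi}^\pi\mid\exists\mathbf{w}\text{ s.t. }\forall\pi',\ v^\pi_{\mathbf{w}}\ge v^{\pi'}_{\mathbf{w}}\}$. A set $\Psi$ of expected successor feature vectors is an $\epsilon$-CCS if for all $\mathbf{w}\in\mathcal{W}$, $\max_{\boldsymbol{\psi}\in\mathrm{CCS}}\boldsymbol{\psi}\cdot\mathbf{w}-\max_{\boldsymbol{\psi}\in\Psi}\boldsymbol{\psi}\cdot\mathbf{w}\le\epsilon$ (equivalently $v^*_{\mathbf{w}}-\max_{\boldsymbol{\psi}\in\Psi}\boldsymbol{\psi}\cdot\mathbf{w}\le\epsilon$). For a policy set $\Pi$ and $\mathbf{w}\in\mathcal{W}$, the GPI policy is $\pi^{\text{GPI}}(s;\mathbf{w})\in\arg\max_{a\in\mathcal{A}}\max_{\pi\in\Pi}q^\pi_{\mathbf{w}}(s,a)$, and the GPI-expanded set is $\Psi^{\text{GPI}}=\{\boldsymbol{\psi}^\pi\mid\pi\in\{\pi^{\text{GPI}}(\cdot;\mathbf{w}):\mathbf{w}\in\mathcal{W}\}\}$. *)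

(* Defs.v *)
From HB Require Import structures.
From mathcomp Require Import all_boot all_order all_algebra.
From mathcomp Require Import all_classical all_reals all_analysis.
Set Implicit Arguments. Unset Strict Implicit. Unset Printing Implicit Defensive.
Import Order.TTheory GRing.Theory Num.Theory.
Import numFieldNormedType.Exports.
Local Open Scope classical_set_scope.
Local Open Scope ring_scope.

Section Defs.
Variables (R : realType) (S A : finType) (d : nat).

Definition dotv (u v : 'rV[R]_d) : R := \sum_(k < d) u 0 k * v 0 k.
Definition norm2 (u : 'rV[R]_d) : R := Num.sqrt (dotv u u).

(* The task set W: the probability simplex. *)
Definition simplex : set 'rV[R]_d :=
  [set w | (forall k, 0 <= w 0 k) /\ \sum_(k < d) w 0 k = 1].

Definition is_kernel (p : S -> A -> S -> R) : Prop :=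
  forall s a, (forall s', 0 <= p s a s') /\ \sum_(s' : S) p s a s' = 1.
Definition is_distr (mu : S -> R) : Prop :=
  (forall s, 0 <= mu s) /\ \sum_(s : S) mu s = 1.

(* occ p pi s a t x b = Pr(S_{t'+t} = x, A_{t'+t} = b | S_{t'} = s, A_{t'} = a),
   following pi after the first action. *)
Fixpoint occ (p : S -> A -> S -> R) (pi : S -> A) (s : S) (a : A) (t : nat)
  : S -> A -> R :=
  match t with
  | 0 => fun x b => if (x == s) && (b == a) then 1 else 0
  | t'.+1 => fun y c =>
      if c == pi y then \sum_(x : S) \sum_(b : A) occ p pi s a t' x b * p x b y
      else 0
  end.

(* Successor features psi^pi(s,a)
   = E_pi[ sum_i gamma^i phi(S_{t+i},A_{t+i},S_{t+i+1}) | S_t = s, A_t = a ]. *)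
Definition sf (p : S -> A -> S -> R) (phi : S -> A -> S -> 'rV[R]_d) (gamma : R)
  (pi : S -> A) (s : S) (a : A) : 'rV[R]_d :=
  \row_k limn (series (fun t : nat =>
     gamma ^+ t * \sum_(x : S) \sum_(b : A)
        occ p pi s a t x b * \sum_(y : S) p x b y * phi x b y 0 k)).

Definition qval p phi gamma pi (w : 'rV[R]_d) s a : R :=
  dotv (sf p phi gamma pi s a) w.

Definition esf p (mu : S -> R) phi gamma (pi : S -> A) : 'rV[R]_d :=
  \sum_(s : S) mu s *: sf p phi gamma pi s (pi s).

Definition vpol p mu phi gamma pi (w : 'rV[R]_d) : R := dotv (esf p mu phi gamma pi) w.

Definition vstar p mu phi gamma (w : 'rV[R]_d) : R :=
  sup [set vpol p mu phi gamma pi w | pi in [set: S -> A]].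

Definition optimal_for p mu phi gamma (pi : S -> A) (w : 'rV[R]_d) : Prop :=
  forall pi' : S -> A, vpol p mu phi gamma pi' w <= vpol p mu phi gamma pi w.

Definition eps_CCS p mu phi gamma (Psi : set 'rV[R]_d) (eps : R) : Prop :=
  forall w, simplex w ->
    vstar p mu phi gamma w - sup [set dotv psi w | psi in Psi] <= eps.

(* GPI policy w.r.t. the policy set {pis i} and weight w:
   pi s in argmax_a max_i q^{pis i}_w(s,a). *)
Definition is_gpi_policy p phi gamma (n : nat) (pis : 'I_n -> S -> A)
  (w : 'rV[R]_d) (pi : S -> A) : Prop :=
  forall s (a : A) (i : 'I_n), exists j : 'I_n,
    qval p phi gamma (pis i) w s a <= qval p phi gamma (pis j) w s (pi s).

Definition phi_max (phi : S -> A -> S -> 'rV[R]_d) : R :=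
  \big[Num.max/0]_(s : S) \big[Num.max/0]_(a : A) \big[Num.max/0]_(s' : S)
     norm2 (phi s a s').

Definition cover_radius (n : nat) (ws : 'I_n -> 'rV[R]_d) : R :=
  sup [set inf [set norm2 (w - ws i) | i in [set: 'I_n]] | w in simplex].

End Defs.

(* Main.v *)
Require Import Defs.
From HB Require Import structures.
From mathcomp Require Import all_boot all_order all_algebra.
From mathcomp Require Import all_classical all_reals all_analysis.
Import Order.TTheory GRing.Theory Num.Theory.
Import numFieldNormedType.Exports.
Local Open Scope classical_set_scope.
Local Open Scope ring_scope.
From mathcomp Require Import ring lra.
Set Implicit Arguments. Unset Strict Implicit. Unset Printing Implicit Defensive.
Lemma sum_cvg_seq (R : realType) (I : Type) (r : seq I) (f : I -> nat -> R) (l : I -> R) :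
  (forall i, f i n @[n --> \oo] --> l i) ->
  (\sum_(i <- r) f i n) @[n --> \oo] --> \sum_(i <- r) l i.
Proof.
move=> H; elim: r => [|i r IH].
  rewrite big_nil; under eq_cvg do rewrite big_nil; exact: cvg_cst.
rewrite big_cons; under eq_cvg do rewrite big_cons.
exact: cvgD.
Qed.

Section Bell.
Variables (R : realType) (S A : finType) (p : S -> A -> S -> R) (gamma : R).
Hypotheses (Hp : is_kernel p) (Hg0 : 0 <= gamma) (Hg1 : gamma < 1).
Variable (pi : S -> A).

Lemma bell_bound (F : nat -> S -> A -> R) (C : R) :
  (forall t s a, F t.+1 s a = gamma * \sum_y p s a y * F t y (pi y)) ->
  (forall s a, `|F 0%N s a| <= C) ->
  forall t s a, `|F t s a| <= C * gamma ^+ t.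
Proof.
move=> HF H0; elim=> [|t IH] s a; first by rewrite expr0 mulr1.
rewrite HF normrM ger0_norm // exprS mulrCA ler_wpM2l //.
apply: le_trans (ler_norm_sum _ _ _) _.
have [p0 p1] := Hp s a.
apply: (@le_trans _ _ (\sum_y p s a y * (C * gamma ^+ t))).

  apply: ler_sum => y _; rewrite normrM ger0_norm //; exact: ler_wpM2l.
by rewrite -mulr_suml p1 mul1r.
Qed.

Lemma bell_series (F : nat -> S -> A -> R) (C : R) :
  (forall t s a, F t.+1 s a = gamma * \sum_y p s a y * F t y (pi y)) ->
  (forall s a, `|F 0%N s a| <= C) ->
  forall s a, cvgn (series (fun t => F t s a)) /\
   limn (series (fun t => F t s a)) =
     F 0%N s a + gamma * \sum_y p s a y * limn (series (fun t => F t y (pi y))).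
Proof.
move=> HF H0.
have Hb := @bell_bound F C HF H0.
have Hc : forall s a, cvgn (series (fun t => F t s a)).
  move=> s a; apply: normed_cvg.
  have C0 : 0 <= C by apply: le_trans (H0 s a).
  apply: (@series_le_cvg _ _ (geometric C gamma)).
  - by move=> n /=; rewrite normr_ge0.
  - by move=> n; rewrite /geometric /= mulr_ge0 // exprn_ge0.
  - by move=> n; exact: Hb.
  - by apply: is_cvg_geometric_series; rewrite ger0_norm.
move=> s a; split; first exact: Hc.
apply: cvg_lim => //.
rewrite -cvg_shiftS /=.
have -> : (fun n => series (fun t => F t s a) n.+1) =
   (fun n => F 0%N s a + gamma * \sum_y p s a y * series (fun t => F t y (pi y)) n).
  apply: funext => n; rewrite /series /= big_nat_recl //; congr (_ + _).
  under eq_bigr do rewrite HF.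
  rewrite -mulr_sumr; congr (_ * _).
  under eq_bigr do rewrite mulr_sumr.
  rewrite exchange_big /=; apply: eq_bigr => y _.
  by [].
apply: cvgD; first exact: cvg_cst.
apply: cvgMr; apply: sum_cvg_seq => y.
apply: cvgMr; exact: Hc.
Qed.
End Bell.
Section Occ.
Variables (R : realType) (S A : finType) (p : S -> A -> S -> R).

Lemma sum_ind (f : S -> A -> R) s a :
  \sum_x' \sum_b' (if (x' == s) && (b' == a) then 1 else 0) * f x' b' = f s a.
Proof.
rewrite (bigD1 s) //= (bigD1 a) //= !eqxx mul1r.
rewrite big1 ?addr0; last by move=> b /negbTE ->; rewrite andbF mul0r.
rewrite big1 ?addr0 //; move=> x /negbTE xs; apply: big1 => b _.
by rewrite xs mul0r.
Qed.

Lemma sum_swap3 (c : S -> R) (o : S -> S -> A -> R) (h : S -> A -> R) :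
  \sum_x \sum_b (\sum_y c y * o y x b) * h x b =
  \sum_y c y * \sum_x \sum_b o y x b * h x b.
Proof.
under eq_bigr do under eq_bigr do rewrite mulr_suml.
under eq_bigr do rewrite exchange_big.
rewrite exchange_big; apply: eq_bigr => y _.
rewrite mulr_sumr; apply: eq_bigr => x _.
rewrite mulr_sumr; apply: eq_bigr => b _.
by rewrite mulrA.
Qed.

Variable (pi : S -> A).

Lemma occS s a t x b :
  occ p pi s a t.+1 x b = \sum_y p s a y * occ p pi y (pi y) t x b.
Proof.
elim: t x b => [|t IH] x b.
  rewrite /= sum_ind.
  rewrite (bigD1 x) //= eqxx /=.
  rewrite big1 ?addr0; last first.
    by move=> y yx; rewrite eq_sym (negbTE yx) /= mulr0.
  by case: (b == pi x); rewrite ?mulr1 ?mulr0.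
have -> : occ p pi s a t.+2 x b = if b == pi x then
   \sum_x' \sum_b' occ p pi s a t.+1 x' b' * p x' b' x else 0 by [].
case: eqP => bx.
  under eq_bigr do under eq_bigr do rewrite IH.
  rewrite sum_swap3; apply: eq_bigr => y _ /=.
  by rewrite bx eqxx.
by rewrite big1 // => y _ /=; case: eqP => // _; rewrite mulr0.
Qed.
End Occ.

Section SF.
Variables (R : realType) (S A : finType) (d : nat) (p : S -> A -> S -> R) (gamma : R).
Variable (phi : S -> A -> S -> 'rV[R]_d).
Hypotheses (Hp : is_kernel p) (Hg0 : 0 <= gamma) (Hg1 : gamma < 1).

Definition gk k x b := \sum_y p x b y * phi x b y 0 k.
Definition rw (w : 'rV[R]_d) x b := \sum_y p x b y * dotv (phi x b y) w.

Lemma le_sum2 (f : S -> A -> R) s a : `|f s a| <= \sum_s' \sum_a' `|f s' a'|.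
Proof.
rewrite (bigD1 s) //= (bigD1 a) //= -addrA lerDl addr_ge0 //; apply: sumr_ge0 => *.
  by [].
by apply: sumr_ge0 => *.
Qed.

Lemma sf_bellman (pi : S -> A) s a k :
  sf p phi gamma pi s a 0 k =
  gk k s a + gamma * \sum_y p s a y * sf p phi gamma pi y (pi y) 0 k.
Proof.
rewrite /sf !mxE; under [in RHS]eq_bigr do rewrite mxE.
set F := fun t s a => gamma ^+ t * \sum_x \sum_b occ p pi s a t x b * gk k x b.
have HF : forall t s a, F t.+1 s a = gamma * \sum_y p s a y * F t y (pi y).
  move=> t s' a'; rewrite /F.
  under eq_bigr do under eq_bigr do rewrite occS.
  rewrite sum_swap3 exprS -mulrA; congr (_ * _).
  rewrite mulr_sumr; apply: eq_bigr => y _; by rewrite mulrCA.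
have H0 : forall s a, F 0%N s a = gk k s a.
  by move=> s' a'; rewrite /F expr0 mul1r /= sum_ind.
have := (@bell_series R S A p gamma Hp Hg0 Hg1 pi F (\sum_s' \sum_a' `|gk k s' a'|) HF _ s a).2.
rewrite H0; apply => s' a'; rewrite H0; exact: le_sum2.
Qed.

Lemma q_bellman (pi : S -> A) (w : 'rV[R]_d) s a :
  qval p phi gamma pi w s a =
  rw w s a + gamma * \sum_y p s a y * qval p phi gamma pi w y (pi y).
Proof.
rewrite /qval /dotv /rw.
under eq_bigr do rewrite sf_bellman mulrDl.
rewrite big_split /=; congr (_ + _).
  rewrite /gk; under eq_bigr do rewrite mulr_suml.
  rewrite exchange_big; apply: eq_bigr => y _ /=.
  rewrite mulr_sumr; apply: eq_bigr => k _; by rewrite mulrA.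
under eq_bigr do rewrite -mulrA mulr_suml.
rewrite -mulr_sumr; congr (_ * _).
under [in RHS]eq_bigr do rewrite mulr_sumr.
rewrite exchange_big /=; apply: eq_bigr => y _; apply: eq_bigr => k _.
by rewrite mulrA.
Qed.
End SF.
Lemma cs_sq (R : realType) (d : nat) (x u : 'I_d -> R) :
  (\sum_k x k * u k) ^+ 2 <= (\sum_k x k ^+ 2) * (\sum_k u k ^+ 2).
Proof.
have H : 0 <= \sum_k \sum_l (x k * u l - x l * u k) ^+ 2.
  by apply: sumr_ge0 => k _; apply: sumr_ge0 => l _; exact: sqr_ge0.
have E : \sum_k \sum_l (x k * u l - x l * u k) ^+ 2 =
   \sum_k \sum_l (x k ^+ 2 * u l ^+ 2) + \sum_k \sum_l (x l ^+ 2 * u k ^+ 2)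
   - 2 * \sum_k \sum_l (x k * u k * (x l * u l)).
  rewrite mulr_sumr -big_split -sumrB /=; apply: eq_bigr => k _.
  rewrite mulr_sumr -big_split -sumrB /=; apply: eq_bigr => l _.
  ring.
rewrite [X in _ + X - _]exchange_big /= in E.
rewrite expr2 !big_distrlr /=.
move: H; rewrite E => H.
lra.
Qed.

Lemma dotv_cs (R : realType) (d : nat) (x u : 'rV[R]_d) :
  `|dotv x u| <= norm2 x * norm2 u.
Proof.
rewrite /norm2 /dotv -sqrtrM; last by apply: sumr_ge0 => k _; rewrite -expr2; exact: sqr_ge0.
rewrite -sqrtr_sqr ler_sqrt; last first.
  by apply: mulr_ge0; apply: sumr_ge0 => k _; rewrite -expr2; exact: sqr_ge0.
have := @cs_sq _ _ (fun k => x 0 k) (fun k => u 0 k).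
have E : forall v : 'rV[R]_d, \sum_k v 0 k * v 0 k = \sum_k v 0 k ^+ 2.
  by move=> v; apply: eq_bigr => k _; rewrite expr2.
by rewrite !E.
Qed.

Section Main.
Variables (R : realType) (S A : finType) (d : nat) (p : S -> A -> S -> R) (mu : S -> R) (gamma : R).
Variable (phi : S -> A -> S -> 'rV[R]_d).
Hypotheses (Hp : is_kernel p) (Hmu : is_distr mu) (Hg0 : 0 <= gamma) (Hg1 : gamma < 1).

Lemma vpol_eq pi w : vpol p mu phi gamma pi w =
  \sum_s mu s * qval p phi gamma pi w s (pi s).
Proof.
rewrite /vpol /esf /qval /dotv.
under eq_bigr do rewrite summxE.
under eq_bigr do under eq_bigr do rewrite mxE.
under eq_bigr do rewrite mulr_suml.
rewrite exchange_big /=; apply: eq_bigr => s _.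
rewrite mulr_sumr; apply: eq_bigr => k _; by rewrite mulrA.
Qed.

Lemma psum_le (s : S) (a : A) (f : S -> R) M :
  (forall y, f y <= M) -> \sum_y p s a y * f y <= M.
Proof.
move=> H; have [p0 p1] := Hp s a.
apply: (@le_trans _ _ (\sum_y p s a y * M)).
  by apply: ler_sum => y _; apply: ler_wpM2l.
by rewrite -mulr_suml p1 mul1r.
Qed.

Lemma q_bound pi w C : (forall s a, `|rw p phi w s a| <= C) ->
  forall s a, `|qval p phi gamma pi w s a| <= C / (1 - gamma).
Proof.
move=> HC s a.
have C0 : 0 <= C := le_trans (normr_ge0 _) (HC s a).
set M := \big[Num.max/0]_(x : S * A) `|qval p phi gamma pi w x.1 x.2|.
have HM : forall s a, `|qval p phi gamma pi w s a| <= M.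
  by move=> s' a'; exact: (le_bigmax 0 (fun x : S * A => `|qval p phi gamma pi w x.1 x.2|) (s', a')).
have M0 : 0 <= M by exact: bigmax_ge_id.
have HMC : M <= C + gamma * M.
  apply: bigmax_le; first by apply: addr_ge0 => //; apply: mulr_ge0.
  move=> [s' a'] _ /=; rewrite (q_bellman phi Hp Hg0 Hg1).
  apply: le_trans (ler_normD _ _) _; apply: lerD => //.
  rewrite normrM ger0_norm //; apply: ler_wpM2l => //.
  apply: le_trans (ler_norm_sum _ _ _) _.
  have [p0 _] := Hp s' a'.
  apply: (@le_trans _ _ (\sum_y p s' a' y * `|qval p phi gamma pi w y (pi y)|)).
    by apply: ler_sum => y _; rewrite normrM ger0_norm.
  by apply: psum_le => y; exact: HM.
apply: le_trans (HM s a) _.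
rewrite ler_pdivlMr ?subr_gt0 //.
nra.
Qed.

Lemma gpi_ge n (pis : 'I_n -> S -> A) w pi :
  is_gpi_policy p phi gamma pis w pi ->
  forall i s a, qval p phi gamma (pis i) w s a <= qval p phi gamma pi w s a.
Proof.
move=> H.
set D := fun x : 'I_n * S * A =>
  qval p phi gamma (pis x.1.1) w x.1.2 x.2 - qval p phi gamma pi w x.1.2 x.2.
set M := \big[Num.max/0]_x D x.
have HM : forall x, D x <= M by move=> x; exact: le_bigmax.
have M0 : 0 <= M by exact: bigmax_ge_id.
have HMg : M <= gamma * M.
  apply: bigmax_le; first by apply: mulr_ge0.
  move=> [[i s] a] _; rewrite /D /= !(q_bellman phi Hp Hg0 Hg1).
  rewrite opprD addrACA subrr add0r -mulrBr -sumrB.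
  apply: ler_wpM2l => //.
  under eq_bigr do rewrite -mulrBr.
  apply: psum_le => y.
  have [j Hj] := H y (pis i y) i.
  apply: le_trans (HM (j, y, pi y)); rewrite /D /=.
  by rewrite lerD2r.
have M0' : M <= 0.
  have h : (1 - gamma) * M <= 0 by rewrite mulrBl mul1r subr_le0.
  by rewrite pmulr_rle0 ?subr_gt0 in h.
move=> i s a; rewrite -subr_le0; exact: le_trans (HM (i, s, a)) M0'.
Qed.

Lemma vpol_bound pi w C : (forall s a, `|rw p phi w s a| <= C) ->
  `|vpol p mu phi gamma pi w| <= C / (1 - gamma).
Proof.
move=> HC; rewrite vpol_eq.
have [m0 m1] := Hmu.
apply: le_trans (ler_norm_sum _ _ _) _.
apply: (@le_trans _ _ (\sum_s mu s * (C / (1 - gamma)))).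
  apply: ler_sum => s _; rewrite normrM ger0_norm //; apply: ler_wpM2l => //.
  exact: q_bound.
by rewrite -mulr_suml m1 mul1r.
Qed.

Lemma norm2_ge0 (u : 'rV[R]_d) : 0 <= norm2 u.
Proof. exact: sqrtr_ge0. Qed.

Lemma phi_max_ge s a y : norm2 (phi s a y) <= phi_max phi.
Proof.
rewrite /phi_max.
apply: le_trans (le_bigmax 0 _ s).
apply: le_trans (le_bigmax 0 _ a).
exact: (le_bigmax 0 (fun y => norm2 (phi s a y)) y).
Qed.

Lemma phi_max_ge0 : 0 <= phi_max phi.
Proof. exact: bigmax_ge_id. Qed.

Lemma rw_bound u s a : `|rw p phi u s a| <= phi_max phi * norm2 u.
Proof.
rewrite /rw; apply: le_trans (ler_norm_sum _ _ _) _.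
have [p0 p1] := Hp s a.
apply: (@le_trans _ _ (\sum_y p s a y * (phi_max phi * norm2 u))).
  apply: ler_sum => y _; rewrite normrM ger0_norm //; apply: ler_wpM2l => //.
  apply: le_trans (dotv_cs _ _) _.
  by apply: ler_wpM2r; [exact: norm2_ge0|exact: phi_max_ge].
by rewrite -mulr_suml p1 mul1r.
Qed.

Lemma vpol_sub pi w w' : vpol p mu phi gamma pi w =
   vpol p mu phi gamma pi w' + vpol p mu phi gamma pi (w - w').
Proof.
rewrite /vpol /dotv -big_split /=; apply: eq_bigr => k _.
rewrite !mxE; ring.
Qed.

End Main.

Lemma simplex_le1 (R : realType) (d : nat) (w : 'rV[R]_d) k :
  simplex w -> 0 <= w 0 k <= 1.
Proof.
move=> [H0 H1]; rewrite H0 /= -H1 (bigD1 k) //= lerDl.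
by apply: sumr_ge0 => j _.
Qed.

Lemma simplex_diam (R : realType) (d : nat) (w v : 'rV[R]_d) :
  simplex w -> simplex v -> norm2 (w - v) <= Num.sqrt d%:R.
Proof.
move=> Hw Hv; rewrite /norm2 ler_sqrt ?ler0n //.
apply: (@le_trans _ _ (\sum_(k < d) (1 : R))); last by rewrite sumr_const card_ord.
apply: ler_sum => k _; rewrite !mxE.
have /andP[a0 a1] := simplex_le1 k Hw.
have /andP[b0 b1] := simplex_le1 k Hv.
nra.
Qed.

Theorem theorem2 (R : realType) (S A : finType) (d : nat)
  (p : S -> A -> S -> R) (mu : S -> R) (gamma : R)
  (phi : S -> A -> S -> 'rV[R]_d)
  (Hp : is_kernel p) (Hmu : is_distr mu)
  (Hg0 : 0 <= gamma) (Hg1 : gamma < 1)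
  (n : nat) (Hn : (0 < n)%N)
  (pis : 'I_n -> S -> A) (ws : 'I_n -> 'rV[R]_d)
  (Hws : forall i, simplex (ws i))
  (Hopt : forall i, optimal_for p mu phi gamma (pis i) (ws i))
  (eps1 : R)
  (HPsi : eps_CCS p mu phi gamma
            [set esf p mu phi gamma (pis i) | i in [set: 'I_n]] eps1)
  (gpi : 'rV[R]_d -> S -> A)
  (Hgpi : forall w, simplex w -> is_gpi_policy p phi gamma pis w (gpi w)) :
  eps_CCS p mu phi gamma
    [set esf p mu phi gamma (gpi w) | w in @simplex R d]
    (Num.min eps1
       (2 / (1 - gamma) * phi_max phi * cover_radius ws)).
Proof.
move=> w Hw.
set G := [set dotv psi w | psi in [set esf p mu phi gamma (gpi w0) | w0 in @simplex R d]].
pose i0 := Ordinal Hn.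
pose Cw := \sum_s \sum_a `|rw p phi w s a|.
have HCw : forall s a, `|rw p phi w s a| <= Cw by move=> s a; exact: le_sum2.
have GU : has_ubound G.
  exists (Cw / (1 - gamma)) => _ [_ [w0 _ <-] <-].
  apply: le_trans (ler_norm _) _.
  exact: (vpol_bound Hp Hmu Hg0 Hg1 (gpi w0) HCw).
have key : forall i, vpol p mu phi gamma (pis i) w <= vpol p mu phi gamma (gpi w) w.
  move=> i; rewrite !vpol_eq; apply: ler_sum => s _.
  have [m0 _] := Hmu; apply: ler_wpM2l => //.
  have [j Hj] := Hgpi w Hw s (pis i s) i.
  apply: le_trans Hj _.
  exact: (gpi_ge Hp Hg0 Hg1 (Hgpi w Hw) j s (gpi w s)).
have inG : vpol p mu phi gamma (gpi w) w <= sup G.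
  have HG := ub_le_sup GU; apply: HG.
  by exists (esf p mu phi gamma (gpi w)) => //; exists w.
rewrite le_min; apply/andP; split.
  have Psi_le : sup [set dotv psi w | psi in
      [set esf p mu phi gamma (pis i) | i in [set: 'I_n]]] <= sup G.
    apply: ge_sup.
      exists (dotv (esf p mu phi gamma (pis i0)) w).
      by exists (esf p mu phi gamma (pis i0)) => //; exists i0.
    move=> _ [_ [i _ <-] <-]; exact: le_trans (key i) inG.
  have := HPsi w Hw; lra.
have [i _ Hi] := @arg_minP _ _ _ i0 xpredT (fun j => norm2 (w - ws j)) isT.
set delta := norm2 (w - ws i).
have Hdelta : delta <= cover_radius ws.
  rewrite /cover_radius.
  apply: (@le_trans _ _ (inf [set norm2 (w - ws j) | j in [set: 'I_n]])).
    apply: lb_le_inf; first by exists delta; exists i.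
    by move=> _ [j _ <-]; exact: Hi.
  apply: ub_le_sup; last by exists w.
  exists (Num.sqrt d%:R) => _ [w' Hw' <-].
  apply: (@le_trans _ _ (norm2 (w' - ws i0))); last exact: simplex_diam.
  apply: ge_inf; last by exists i0.
  by exists 0 => _ [j _ <-]; exact: norm2_ge0.
have Hr : forall s a, `|rw p phi (w - ws i) s a| <= phi_max phi * delta.
  by move=> s a; exact: rw_bound.
have phi0 : 0 <= phi_max phi by exact: phi_max_ge0.
have g1 : 0 < 1 - gamma by rewrite subr_gt0.
have HK : 2 * (phi_max phi * delta / (1 - gamma)) <=
          2 / (1 - gamma) * phi_max phi * cover_radius ws.
  have -> : 2 / (1 - gamma) * phi_max phi * cover_radius ws =
            2 * (phi_max phi * cover_radius ws / (1 - gamma)) by ring.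
  rewrite ler_pM2l ?ltr0n //; apply: ler_wpM2r.
    by rewrite invr_ge0 ltW.
  exact: ler_wpM2l.
have HvB : forall pi', vpol p mu phi gamma pi' w <= sup G +
    2 / (1 - gamma) * phi_max phi * cover_radius ws.
  move=> pi'.
  rewrite (vpol_sub p mu gamma phi pi' w (ws i)).
  have h1 := Hopt i pi'.
  have h2 := vpol_sub p mu gamma phi (pis i) w (ws i).
  have h3 := vpol_bound Hp Hmu Hg0 Hg1 pi' Hr.
  have h4 := vpol_bound Hp Hmu Hg0 Hg1 (pis i) Hr.
  rewrite ler_norml in h3; rewrite ler_norml in h4.
  case/andP: h3 => h3a h3b; case/andP: h4 => h4a h4b.
  have := key i.
  lra.
have Hvs : vstar p mu phi gamma w <= sup G +
    2 / (1 - gamma) * phi_max phi * cover_radius ws.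
  apply: ge_sup.
    by exists (vpol p mu phi gamma (pis i0) w); exists (pis i0).
  by move=> _ [pi' _ <-]; exact: HvB.
lra.
Qed.
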